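(* Let $G$ be a finite, simple, connected, non-trivial graph with weak total metric dimension $m=\dim_{wt}(G)$ and diameter $D=\mathrm{diam}(G)$. Then: (1) $|V(G)|\le D^m+m$; (2) the maximum degree of $G$ satisfies $\Delta(G)\le 3^m-1$; (3) $G$ has a proper vertex coloring with at most $2^m$ colors.
   Context: All graphs are finite, simple, connected and non-trivial; $d(x,y)$ is the shortest-path distance. A vertex $x$ resolves two vertices $y,z$ if $d(y,x)\ne d(z,x)$. A set $W\subseteq V(G)$ is a resolving set if every two distinct vertices of $G$ are resolved by some element of $W$. A set $W$ is a weak total resolving set (WTR-set) if $W$ is a resolving set and, for every $w\in W$ and every $x\in V(G)\setminus W$, there is $w'\in W\setminus\{w\}$ with $d(x,w')\ne d(w,w')$. The weak total metric dimension $\dim_{wt}(G)$ is the minimum cardinality of a WTR-set for $G$. *)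

(* Defs.v *)
(* A simple graph is a symmetric irreflexive relation e on a finType T. *)
From mathcomp Require Import all_boot.
Set Implicit Arguments. Unset Strict Implicit. Unset Printing Implicit Defensive.

Section Graph.
Variables (T : finType) (e : rel T).

Definition walk_of_length (x y : T) (n : nat) : bool :=
  [exists p : n.-tuple T, path e x p && (last x p == y)].

(* shortest-path distance: least n < #|T| with a walk of length n
   (equals #|T| if y is unreachable from x, which never happens in a connected graph) *)
Definition dist (x y : T) : nat := find (walk_of_length x y) (iota 0 #|T|).

Definition resolves (x y z : T) : bool := dist y x != dist z x.

Definition resolving_set (W : {set T}) : bool :=
  [forall y, forall z, (y != z) ==> [exists w in W, resolves w y z]].

Definition wtr_set (W : {set T}) : bool :=
  resolving_set W &&
  [forall w in W, forall x in ~: W,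
     [exists w' in W :\ w, dist x w' != dist w w']].

(* minimum cardinality of a WTR-set (the whole vertex set is always one) *)
Definition dim_wt : nat := \big[minn/#|T|]_(W : {set T} | wtr_set W) #|W|.

Definition diam : nat := \max_(x : T) \max_(y : T) dist x y.

Definition degree (x : T) : nat := #|[set y | e x y]|.
Definition max_degree : nat := \max_(x : T) degree x.

Definition proper_coloring (k : nat) (c : T -> 'I_k) : Prop :=
  forall x y, e x y -> c x != c y.

Definition connected_graph : Prop := forall x y, connect e x y.
End Graph.

(* Main.v *)
Require Import Defs.
From mathcomp Require Import all_boot.
From mathcomp Require Import zify.
Set Implicit Arguments. Unset Strict Implicit. Unset Printing Implicit Defensive.

Section Aux.
Variables (T : finType) (e : rel T).
Hypothesis e_conn : connected_graph e.

Lemma walk_nil x y : walk_of_length e x y 0 = (x == y).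
Proof.
apply/existsP/idP => [[p /andP[_]]|/eqP->].
  by rewrite (tuple0 p).
by exists [tuple]; rewrite /= eqxx.
Qed.

Lemma walk_cons x y z n : e x y -> walk_of_length e y z n -> walk_of_length e x z n.+1.
Proof.
move=> exy /existsP[p /andP[pp lp]]; apply/existsP; exists (cons_tuple y p).
by rewrite /= exy pp.
Qed.

Lemma dist_spec x y : walk_of_length e x y (dist e x y) /\ dist e x y < #|T|.
Proof.
have [p pp ->] := connectP (e_conn x y).
case: (shortenP pp) => p' pp' up' _.
have hw : walk_of_length e x (last x p') (size p').
  by apply/existsP; exists (in_tuple p'); rewrite pp' eqxx.
have hs : size p' < #|T|.
  by have := max_card (mem (x :: p')); rewrite (card_uniqP up').
have hh : has (walk_of_length e x (last x p')) (iota 0 #|T|).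
  by apply/hasP; exists (size p'); rewrite ?mem_iota.
have hlt : find (walk_of_length e x (last x p')) (iota 0 #|T|) < #|T|.
  by move: hh; rewrite has_find size_iota.
rewrite /dist; split => //.
by have := nth_find 0 hh; rewrite nth_iota.
Qed.

Lemma dist_min x y n : walk_of_length e x y n -> n < #|T| -> dist e x y <= n.
Proof.
move=> hw hn; rewrite leqNgt; apply/negP => /(before_find 0).
by rewrite nth_iota // hw.
Qed.

Lemma dist_lt x y : dist e x y < #|T|.
Proof. exact: (dist_spec x y).2. Qed.

Lemma dist_edge x y w : e x y -> dist e x w <= (dist e y w).+1.
Proof.
move=> exy; case: (ltnP (dist e y w).+1 #|T|) => h.
  by apply: dist_min h; apply: walk_cons exy (dist_spec y w).1.
exact: leq_trans (ltnW (dist_lt x w)) h.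
Qed.

Lemma dist0 x y : (dist e x y == 0) = (x == y).
Proof.
apply/eqP/eqP => [h|->].
  by have := (dist_spec x y).1; rewrite h walk_nil => /eqP.
apply/eqP; rewrite -leqn0; apply: dist_min; first by rewrite walk_nil.
exact: leq_ltn_trans (leq0n _) (dist_lt y y).
Qed.

Lemma resolvingP W y z : resolving_set e W ->
  (forall w, w \in W -> dist e y w = dist e z w) -> y = z.
Proof.
move=> /forallP /(_ y) /forallP /(_ z) /implyP H hd.
apply/eqP; apply/negPn/negP => /H /existsP [w /andP[wW]].
by rewrite /resolves hd // eqxx.
Qed.

Lemma dim_wt_spec : exists W, wtr_set e W /\ #|W| = dim_wt e.
Proof.
rewrite /dim_wt.
apply: (big_ind (fun v => exists W, wtr_set e W /\ #|W| = v)).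
- exists setT; split; last by rewrite cardsT.
  apply/andP; split.
    apply/forallP=> y; apply/forallP=> z; apply/implyP=> yz; apply/existsP.
    exists y; rewrite in_setT /resolves /=.
    have /eqP -> : dist e y y == 0 by rewrite dist0.
    by rewrite eq_sym dist0 eq_sym.
  apply/forallP=> w; apply/implyP=> _; apply/forallP=> x; apply/implyP.
  by rewrite in_setC in_setT.
- move=> a b [A [hA <-]] [B [hB <-]]; rewrite /minn; case: ifP => _.
    by exists A.
  by exists B.
- by move=> W hW; exists W.
Qed.

Lemma dist_le_diam x y : dist e x y <= diam e.
Proof.
rewrite /diam; apply: leq_trans (leq_bigmax x).
exact: (leq_bigmax (F := fun y => dist e x y)).
Qed.

End Aux.

Lemma par a b : a <= b.+1 -> b <= a.+1 -> odd a = odd b -> a = b.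
Proof.
move=> h1 h2 ho; case: (ltngtP a b) => // h.
  have hb : b = a.+1 by apply/eqP; rewrite eqn_leq h2 h.
  by move: ho; rewrite hb oddS; case: (odd a).
have ha : a = b.+1 by apply/eqP; rewrite eqn_leq h1 h.
by move: ho; rewrite ha oddS; case: (odd b).
Qed.

Theorem proposition1 (T : finType) (e : rel T)
  (e_sym : symmetric e) (e_irr : irreflexive e)
  (e_conn : connected_graph e) (nontriv : 1 < #|T|) :
  [/\ #|T| <= diam e ^ dim_wt e + dim_wt e,
      max_degree e <= 3 ^ dim_wt e - 1
    & exists c : T -> 'I_(2 ^ dim_wt e), proper_coloring e c].
Proof.
have [W [hW hm]] := dim_wt_spec e_conn.
rewrite -hm; case/andP: hW => hres _.
have nb : forall x y w, e x y -> dist e x w <= (dist e y w).+1 /\ dist e y w <= (dist e x w).+1.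
  move=> x y w exy; split; first exact: dist_edge.
  by apply: dist_edge => //; rewrite e_sym.
split.
- have Dpos : 0 < diam e.
    have [x [y [_ _ xy]]] := card_gt1P nontriv.
    apply: leq_trans (dist_le_diam e x y).
    by rewrite lt0n dist0.
  pose f x := [ffun i : 'I_#|W| => inord (dist e x (enum_val i)).-1 : 'I_(diam e).-1.+1].
  have finj : {in ~: W &, injective f}.
    move=> x y; rewrite !in_setC => xW yW hxy; apply: (resolvingP hres) => w wW.
    move/ffunP/(_ (enum_rank_in wW w)): hxy.
    rewrite !ffunE !enum_rankK_in // => /(congr1 val) /=.
    have hx := dist_le_diam e x w; have hy := dist_le_diam e y w.
    have hx0 : dist e x w != 0 by rewrite (dist0 e_conn); apply/negP => /eqP => xw; move: xW; rewrite xw wW.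
    have hy0 : dist e y w != 0 by rewrite (dist0 e_conn); apply/negP => /eqP => xw; move: yW; rewrite xw wW.
    rewrite !inordK; lia.
  rewrite -(cardsC W) addnC leq_add2r -(card_in_imset finj).
  apply: leq_trans (max_card _) _.
  by rewrite card_ffun !card_ord prednK.
- rewrite /max_degree; apply/bigmax_leqP => v _; rewrite /degree.
  set N := [set y | e v y].
  pose g y := [ffun i : 'I_#|W| => inord (dist e y (enum_val i) + 1 - dist e v (enum_val i)) : 'I_3].
  have bnd : forall y w, y \in v |: N -> dist e v w <= (dist e y w).+1 /\ dist e y w <= (dist e v w).+1.
    move=> y w; rewrite in_setU1 inE => /orP[/eqP->|/nb]; last by [].
    by split.
  have ginj : {in v |: N &, injective g}.
    move=> x y hx hy hxy; apply: (resolvingP hres) => w wW.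
    move/ffunP/(_ (enum_rank_in wW w)): hxy.
    rewrite !ffunE !enum_rankK_in // => /(congr1 val) /=.
    have [hx1 hx2] := bnd x w hx; have [hy1 hy2] := bnd y w hy.
    rewrite !inordK; lia.
  have := max_card (mem [set g x | x in v |: N]).
  rewrite card_in_imset // cardsU1 card_ffun !card_ord inE e_irr /=.
  lia.
- have Hc : #|{ffun 'I_#|W| -> bool}| = 2 ^ #|W| by rewrite card_ffun card_bool card_ord.
  pose h x := [ffun i : 'I_#|W| => odd (dist e x (enum_val i))].
  exists (fun x => cast_ord Hc (enum_rank (h x))).
  move=> x y exy; apply/negP => /eqP hc.
  have hh : h x = h y by apply: enum_rank_inj; apply: (cast_ord_inj hc).
  suff xy : x = y by move: exy; rewrite xy e_irr.
  apply: (resolvingP hres) => w wW.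
  move/ffunP/(_ (enum_rank_in wW w)): hh.
  rewrite !ffunE !enum_rankK_in //.
  have [h1 h2] := nb x y w exy.
  exact: par.
Qed.
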